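(* Let $\mathcal{B}$ be a Boolean control network with state set $\mathcal{S}$. For any two nonempty sets of states $\mathsf{S}^1,\mathsf{S}^2\subseteq\mathcal{S}$, if $\mathsf{S}^1\subseteq\mathsf{S}^2$ and $\Gamma(\mathsf{S}^2)\ne\infty$, then $\psi(\mathsf{S}^2)\subseteq\psi(\mathsf{S}^1)$.
   Context: $\mathbb{B}=\{0,1\}$. A BCN has inputs $\mathcal{I}=\mathbb{B}^\ell$, states $\mathcal{S}=\mathbb{B}^m$, outputs $\mathcal{O}=\mathbb{B}^n$ and updating rules $\sigma:\mathcal{I}\times\mathcal{S}\to\mathcal{S}$, $\rho:\mathcal{S}\to\mathcal{O}$, with $\mathsf{s}(t+1)=\sigma(\mathsf{i}(t),\mathsf{s}(t))$, $\mathsf{o}(t)=\rho(\mathsf{s}(t))$. With $\varepsilon$ denoting empty input/output, let $\xi(\mathsf{i},\mathsf{s})=\sigma(\mathsf{i},\mathsf{s})$ for $\mathsf{i}\ne\varepsilon$, $\xi(\varepsilon,\mathsf{s})=\mathsf{s}$; for $\mathsf{S}\subseteq\mathcal{S}$, $\zeta(\mathsf{S},\mathsf{i},\mathsf{o})=\{\xi(\mathsf{i},\mathsf{s}):\mathsf{s}\in\mathsf{S},\rho(\xi(\mathsf{i},\mathsf{s}))=\mathsf{o}\}$ if $\mathsf{o}\ne\varepsilon$ and $\zeta(\mathsf{S},\mathsf{i},\varepsilon)=\{\xi(\mathsf{i},\mathsf{s}):\mathsf{s}\in\mathsf{S}\}$. For nonempty $\mathsf{S}$: $P_0(\mathsf{S})$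 iff $|\mathsf{S}|=1$; $P_{n+1}(\mathsf{S})$ iff $|\mathsf{S}|=1$ or there is $\mathsf{i}\in\mathcal{I}$ with $|\zeta(\mathsf{S},\mathsf{i},\varepsilon)|=|\mathsf{S}|$ such that every nonempty $\zeta(\mathsf{S},\mathsf{i},\mathsf{o})$, $\mathsf{o}\in\mathcal{O}$, satisfies $P_n$. $\Gamma(\mathsf{S})\in\mathbb{N}\cup\{\infty\}$ is the least $n$ with $P_n(\mathsf{S})$, or $\infty$ if none. For nonempty $\mathsf{S}$, $\psi(\mathsf{S})=\{\mathsf{i}\in\mathcal{I}: |\zeta(\mathsf{S},\mathsf{i},\varepsilon)|=|\mathsf{S}|$ and for all $\mathsf{o}\in\mathcal{O}$, $\zeta(\mathsf{S},\mathsf{i},\mathsf{o})\ne\emptyset\Rightarrow\Gamma(\zeta(\mathsf{S},\mathsf{i},\mathsf{o}))\ne\infty\}$. *)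

(* Defs.v *)
From Stdlib Require Import ClassicalEpsilon.
From mathcomp Require Import all_boot.
Set Implicit Arguments. Unset Strict Implicit. Unset Printing Implicit Defensive.

Record BCN (l m n : nat) := {
  sigma : l.-tuple bool -> m.-tuple bool -> m.-tuple bool;
  rho   : m.-tuple bool -> n.-tuple bool }.

Section Defs.
Variables (l m n : nat) (B : BCN l m n).
Local Notation I := (l.-tuple bool).
Local Notation St := (m.-tuple bool).
Local Notation O := (n.-tuple bool).

(* None plays the role of the empty input / output epsilon. *)
Definition xi (i : option I) (s : St) : St :=
  match i with Some i' => sigma B i' s | None => s end.

Definition zeta (S : {set St}) (i : option I) (o : option O) : {set St} :=
  match o with
  | Some o' => [set xi i s | s in S & rho B (xi i s) == o']
  | None => [set xi i s | s in S]
  end.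

(* P_k(S) (meaningful for nonempty S). *)
Fixpoint Pn (k : nat) (S : {set St}) : bool :=
  match k with
  | 0 => #|S| == 1
  | k'.+1 => (#|S| == 1) ||
      [exists i : I, (#|zeta S (Some i) None| == #|S|) &&
         [forall o : O, (zeta S (Some i) (Some o) != set0) ==>
                         Pn k' (zeta S (Some i) (Some o))]]
  end.

(* Gamma S : least k with P_k S, or None (= infinity). *)
Definition Gamma (S : {set St}) : option nat :=
  match excluded_middle_informative (exists k, Pn k S) with
  | left ex => Some (ex_minn ex)
  | right _ => None
  end.

Definition psi (S : {set St}) : {set I} :=
  [set i : I | (#|zeta S (Some i) None| == #|S|) &&
     [forall o : O, (zeta S (Some i) (Some o) != set0) ==>
                     (Gamma (zeta S (Some i) (Some o)) != None)]].
End Defs.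

(* Main.v *)
Require Import Defs.
From mathcomp Require Import all_boot.
From Stdlib Require Import ClassicalEpsilon.

Lemma zeta_sub (l m n : nat) (B : BCN l m n) (S1 S2 : {set m.-tuple bool}) i o :
  S1 \subset S2 -> zeta B S1 i o \subset zeta B S2 i o.
Proof.
move=> sub; case: o => [o|] /=.
- apply/subsetP => x /imsetP [s]; rewrite inE => /andP[hs hp] ->.
  apply/imsetP; exists s => //; rewrite inE hp (subsetP sub) //.
- by apply: imsetS.
Qed.

Lemma Pn_mono (l m n : nat) (B : BCN l m n) k : forall (T T' : {set m.-tuple bool}),
  T' \subset T -> T' != set0 -> Pn B k T -> Pn B k T'.
Proof.
have card1 : forall (T T' : {set m.-tuple bool}), T' \subset T -> T' != set0 ->
   #|T| == 1 -> #|T'| == 1.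
  move=> T T' sub ne /eqP h; rewrite eqn_leq -h subset_leq_card //=; rewrite h.
  by rewrite card_gt0.
elim: k => [|k IH] T T' sub ne /=; first exact: card1.
case/orP => [h|]; first by rewrite (card1 _ _ sub ne h).
case/existsP => i /andP [hi /forallP ho]; apply/orP; right.
apply/existsP; exists i; apply/andP; split.
- apply/imset_injP => x y hx hy; move/imset_injP: hi; apply; exact: (subsetP sub).
- apply/forallP => o; apply/implyP => hne.
  have s := @zeta_sub _ _ _ B _ _ (Some i) (Some o) sub.
  apply: (IH _ _ s hne).
  move/implyP: (ho o); apply.
  apply/set0Pn; case/set0Pn: hne => x hx; exists x; exact: (subsetP s).
Qed.

Lemma GammaP (l m n : nat) (B : BCN l m n) (S : {set m.-tuple bool}) :
  Gamma B S != None <-> exists k, Pn B k S.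
Proof.
rewrite /Gamma; case: excluded_middle_informative => h; split => //.
Qed.

Theorem lemma5 (l m n : nat) (B : BCN l m n) (S1 S2 : {set m.-tuple bool}) :
  S1 != set0 -> S2 != set0 -> S1 \subset S2 -> Gamma B S2 <> None ->
  psi B S2 \subset psi B S1.
Proof.
move=> ne1 ne2 sub _; apply/subsetP => i; rewrite !inE => /andP [hi /forallP ho].
apply/andP; split.
- apply/imset_injP => x y hx hy; move/imset_injP: hi; apply; exact: (subsetP sub).
- apply/forallP => o; apply/implyP => hne.
  have s := @zeta_sub _ _ _ B _ _ (Some i) (Some o) sub.
  have hne2 : zeta B S2 (Some i) (Some o) != set0.
    apply/set0Pn; case/set0Pn: hne => x hx; exists x; exact: (subsetP s).
  move/implyP: (ho o) => /(_ hne2) /GammaP [k hk].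
  apply/GammaP; exists k; exact: (@Pn_mono _ _ _ B k _ _ s hne hk).
Qed.
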